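(* Let $Q=(q_n)_{n\ge1}$ be a basic sequence that is infinite in limit. For each integer $i\ge1$ set $$\bar\varepsilon_i=\frac{\left(\sum_{j=1}^i 2l_j\right)+i+1}{\left(\sum_{j=1}^i jl_j\right)+i+1},$$ and for each positive integer $n$ let $i(n)$ be the unique integer with $L_{i(n)}<n\le L_{i(n)+1}$. Then $\lim_{n\to\infty}\bar\varepsilon_{i(n)}=0$.
   Context: A basic sequence is a sequence $Q=(q_n)_{n\ge1}$ of integers with $q_n\ge 2$; it is infinite in limit if $q_n\to\infty$. $\mathbb{N}$ denotes the positive integers. For each positive integer $j$ let $\nu_j=\min\{N : q_m\ge 2j^2 \text{ for all } m\ge N\}$. Define $l_1=\max(\nu_2-1,1)$ and, recursively for $i\ge 2$, $l_i=\max\big(\min\{k\in\mathbb{N} : l_1+2l_2+\cdots+(i-1)l_{i-1}+ik\ge \nu_{i+1}-1\},1\big)$. Put $L_i=\sum_{j=1}^i jl_j$, with $L_0=0$. *)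

(* Defs.v *)
From Stdlib Require Import Reals Lia Arith ClassicalEpsilon.
Open Scope R_scope.

(* A sequence q : nat -> nat; only indices n >= 1 are meaningful (q_1, q_2, ...). *)
Definition basic_sequence (q : nat -> nat) : Prop :=
  forall n : nat, (1 <= n)%nat -> (2 <= q n)%nat.

Definition infinite_in_limit (q : nat -> nat) : Prop :=
  forall M : nat, exists N : nat, forall n : nat, (N <= n)%nat -> (M <= q n)%nat.

(* The least positive integer satisfying P (chosen by epsilon; meaningful
   when such an integer exists). *)
Definition least_pos (P : nat -> Prop) : nat :=
  epsilon (inhabits 0%nat)
    (fun k => (1 <= k)%nat /\ P k /\ forall k', (1 <= k')%nat -> P k' -> (k <= k')%nat).

Definition nu (q : nat -> nat) (j : nat) : nat :=
  least_pos (fun N => forall m : nat, (N <= m)%nat -> (2 * j * j <= q m)%nat).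

(* lL q i = (l_i, L_i); lL q 0 = (dummy, L_0 = 0). *)
Fixpoint lL (q : nat -> nat) (i : nat) : nat * nat :=
  match i with
  | O => (0%nat, 0%nat)
  | S O => let l1 := Nat.max (nu q 2 - 1) 1 in (l1, l1)
  | S (S k as i') =>
      let '(_, Lprev) := lL q i' in
      let li := Nat.max
                  (least_pos (fun k' => (nu q (i + 1) - 1 <= Lprev + i * k')%nat)) 1 in
      (li, (Lprev + i * li)%nat)
  end.

Definition l (q : nat -> nat) (i : nat) : nat := fst (lL q i).
Definition L (q : nat -> nat) (i : nat) : nat := snd (lL q i).

Fixpoint sum_1_to (f : nat -> nat) (i : nat) : nat :=
  match i with O => 0%nat | S k => (sum_1_to f k + f (S k))%nat end.

Definition eps_bar (q : nat -> nat) (i : nat) : R :=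
  INR (sum_1_to (fun j => 2 * l q j)%nat i + i + 1) /
  INR (sum_1_to (fun j => j * l q j)%nat i + i + 1).

Definition i_of (q : nat -> nat) (n : nat) : nat :=
  epsilon (inhabits 0%nat) (fun i => (L q i < n <= L q (i + 1))%nat).

(* Main.v *)
Require Import Defs.
From Stdlib Require Import Reals.
From Stdlib Require Import Lia Lra Psatz ClassicalEpsilon.
Open Scope R_scope.

Lemma lL_SS q k : exists li, lL q (S (S k)) =
  (Nat.max li 1, (L q (S k) + S (S k) * Nat.max li 1)%nat).
Proof. unfold L. change (lL q (S (S k))) with
  (let '(_, Lprev) := lL q (S k) in
      let li := Nat.max
                  (least_pos (fun k' => (nu q (S (S k) + 1) - 1 <= Lprev + S (S k) * k')%nat)) 1 in
      (li, (Lprev + S (S k) * li)%nat)).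
  destruct (lL q (S k)) as [a b]. simpl. eexists. reflexivity. Qed.

Lemma l_ge1 q j : (1 <= j)%nat -> (1 <= l q j)%nat.
Proof.
  intros H. destruct j as [|[|k]]; [lia| |].
  - unfold l; simpl. lia.
  - unfold l. destruct (lL_SS q k) as [li E]. rewrite E. simpl fst. lia.
Qed.

Lemma L_rec q i : L q (S i) = (L q i + S i * l q (S i))%nat.
Proof.
  destruct i as [|k].
  - unfold L, l; simpl. lia.
  - unfold l. destruct (lL_SS q k) as [li E]. unfold L at 1. rewrite E. simpl. lia.
Qed.

Lemma L_sum q i : L q i = sum_1_to (fun j => j * l q j)%nat i.
Proof.
  induction i. reflexivity. rewrite L_rec. simpl sum_1_to. lia.
Qed.

Lemma L_mono q i j : (i <= j)%nat -> (L q i <= L q j)%nat.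
Proof.
  induction 1. lia. rewrite L_rec. lia.
Qed.

Lemma L_ge q i : (i * (i+1) <= 2 * L q i)%nat.
Proof.
  induction i. simpl; lia. rewrite L_rec. pose proof (l_ge1 q (S i) ltac:(lia)).
  assert (S i <= S i * l q (S i))%nat by nia.
  assert (S i * (S i + 1) = i*(i+1) + 2 * S i)%nat by ring. lia.
Qed.

Lemma S2_mono q i j : (i <= j)%nat ->
  (sum_1_to (fun j => 2 * l q j)%nat i <= sum_1_to (fun j => 2 * l q j)%nat j)%nat.
Proof. induction 1. lia. change (sum_1_to (fun j => 2 * l q j)%nat (S m)) with (sum_1_to (fun j => 2 * l q j)%nat m + 2 * l q (S m))%nat. lia. Qed.

Lemma S2_bound q K i :
  (K * sum_1_to (fun j => 2 * l q j)%nat i <=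
   K * sum_1_to (fun j => 2 * l q j)%nat K + 2 * L q i)%nat.
Proof.
  induction i. simpl. lia.
  destruct (Compare_dec.le_lt_dec (S i) K) as [h|h].
  - pose proof (S2_mono q _ _ h). nia.
  - rewrite L_rec. change (sum_1_to (fun j => 2 * l q j)%nat (S i)) with (sum_1_to (fun j => 2 * l q j)%nat i + 2 * l q (S i))%nat.
    assert (K * l q (S i) <= S i * l q (S i))%nat by (apply Nat.mul_le_mono_r; lia). nia.
Qed.

Lemma i_exists q m : forall n, (0 < n)%nat -> (n <= L q m)%nat ->
  exists i, (L q i < n <= L q (i + 1))%nat.
Proof.
  induction m; intros n h1 h2.
  - simpl in h2. unfold L in h2. simpl in h2. lia.
  - destruct (Compare_dec.le_lt_dec n (L q m)). apply IHm; auto.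
    exists m. rewrite Nat.add_1_r. lia.
Qed.

Lemma L_ge_id q i : (i <= L q i)%nat.
Proof. pose proof (L_ge q i). nia. Qed.

Lemma i_of_spec q n : (0 < n)%nat -> (L q (i_of q n) < n <= L q (i_of q n + 1))%nat.
Proof.
  intros h. unfold i_of. apply epsilon_spec.
  apply (i_exists q n); auto. apply L_ge_id.
Qed.

Lemma i_of_large q n k : (L q k < n)%nat -> (k <= i_of q n)%nat.
Proof.
  intros h. pose proof (i_of_spec q n ltac:(lia)) as [_ h2].
  destruct (Compare_dec.le_lt_dec k (i_of q n)); auto.
  pose proof (L_mono q (i_of q n + 1) k ltac:(lia)). lia.
Qed.

Theorem mainTheorem16 (q : nat -> nat)
  (hbasic : basic_sequence q) (hinf : infinite_in_limit q) :
  Un_cv (fun n => eps_bar q (i_of q n)) 0.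
Proof.
  intros eps heps.
  destruct (INR_archimed eps 4 heps) as [K HK].
  set (S2K := sum_1_to (fun j => 2 * l q j)%nat K).
  destruct (INR_archimed eps (2 * INR S2K + 4) heps) as [i0 Hi0].
  exists (S (L q i0)). intros n hn. unfold R_dist. rewrite Rminus_0_r.
  set (i := i_of q n).
  assert (hi : (i0 <= i)%nat) by (apply i_of_large; lia).
  pose proof (S2_bound q K i) as H1.
  pose proof (L_ge q i) as H2.
  unfold eps_bar. rewrite <- L_sum.
  fold S2K in H1.
  set (S2 := sum_1_to (fun j => 2 * l q j)%nat i) in *.
  set (Li := L q i) in *.
  apply le_INR in H1. apply le_INR in H2. apply le_INR in hi.
  rewrite !mult_INR, !plus_INR in H1. rewrite !mult_INR, plus_INR in H2.
  rewrite !plus_INR.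
  simpl INR in *.
  rewrite ?mult_INR, ?plus_INR in H1. simpl INR in H1.
  assert (hL : 0 <= INR Li) by apply pos_INR.
  assert (hS : 0 <= INR S2) by apply pos_INR.
  assert (hS0 : 0 <= INR S2K) by apply pos_INR.
  assert (hI : 0 <= INR i) by apply pos_INR.
  assert (hK : 0 < INR K).
  { destruct K. simpl in HK. lra. apply lt_0_INR. lia. }
  assert (hD : 0 < INR Li + INR i + 1) by lra.
  rewrite Rabs_pos_eq by (apply Rmult_le_pos; [lra | apply Rlt_le, Rinv_0_lt_compat; lra]).
  apply (Rmult_lt_reg_r (INR Li + INR i + 1)); auto.
  unfold Rdiv. rewrite Rmult_assoc, Rinv_l by lra. rewrite Rmult_1_r.
  assert (A : INR S2 <= INR S2K + eps * INR Li / 2).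
  { apply (Rmult_le_reg_l (INR K)); auto.
    assert (0 <= (INR K * eps - 4) * INR Li) by (apply Rmult_le_pos; lra).
    assert (2 * INR Li <= INR K * eps * INR Li / 2) by nra.
    rewrite Rmult_plus_distr_l. unfold Rdiv in *. rewrite <- !Rmult_assoc. lra. }
  assert (B : eps * INR i > 2 * INR S2K + 4).
  { assert (INR i0 * eps <= INR i * eps) by (apply Rmult_le_compat_r; lra). lra. }
  assert (C : (INR i + 1) * (eps * (INR i + 2)) >= (INR i + 1) * 4).
  { apply Rmult_ge_compat_l; lra. }
  assert (E : eps * (INR i * (INR i + 1)) <= eps * (2 * INR Li)).
  { apply Rmult_le_compat_l; lra. }
  nra.
Qed.
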